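(* The relation $\{(\rho,\sigma,\pi):\rho,\sigma,\pi\text{ are total and }|\pi|=|\rho|\cdot|\sigma|\}$ is $\Pi_3$-definable in $\mathbf Y^*=\langle\mathcal P,\le,[1]+[1]\rangle$.
   Context: $\mathcal P$ is the set of all integer partitions, including the empty partition $\emptyset$; a partition is a nonincreasing finite sequence of positive integers (its parts), and $|\pi|$ is the sum of its parts. A partition is total if it has exactly one part; $\emptyset$ also counts as total. Young's lattice $\mathbf Y=\langle\mathcal P,\le\rangle$ has $(s_1,\dots,s_r)\le(n_1,\dots,n_t)$ iff $r\le t$ and $s_i\le n_i$ for all $i\le r$; $\mathbf Y^*$ is $\mathbf Y$ with a constant symbol for the partition $(1,1)$. A relation is $\Pi_n$-definable if it is defined by a first-order formula in the language $\{\le,(1,1)\}$ in prenex form with $n$ alternating quantifier blocks, the outermost universal, and a quantifier-free matrix. *)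

(* Defs.v *)
From mathcomp Require Import all_boot.
Set Implicit Arguments. Unset Strict Implicit. Unset Printing Implicit Defensive.

Definition is_partition (s : seq nat) : bool :=
  sorted geq s && all (fun x => 0 < x) s.

Record partition := Part { parts : seq nat; partsP : is_partition parts }.

Definition part_weight (p : partition) : nat := sumn (parts p).

Definition total_part (p : partition) : Prop := size (parts p) <= 1.

Definition young_le (s n : partition) : Prop :=
  size (parts s) <= size (parts n) /\
  forall i, i < size (parts s) -> nth 0 (parts s) i <= nth 0 (parts n) i.

Definition p11 : partition := @Part [:: 1; 1] erefl.

Inductive term := TVar of nat | TConst.

Inductive qf :=
| QTrue | QFalse
| QLe of term & term
| QEq of term & term
| QNot of qf
| QAnd of qf & qf
| QOr of qf & qf.

Definition eval_term (v : nat -> partition) (t : term) : partition :=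
  match t with TVar x => v x | TConst => p11 end.

Fixpoint qf_sat (v : nat -> partition) (f : qf) : Prop :=
  match f with
  | QTrue => True
  | QFalse => False
  | QLe a b => young_le (eval_term v a) (eval_term v b)
  | QEq a b => eval_term v a = eval_term v b
  | QNot g => ~ qf_sat v g
  | QAnd g h => qf_sat v g /\ qf_sat v h
  | QOr g h => qf_sat v g \/ qf_sat v h
  end.

Definition upd (v : nat -> partition) (x : nat) (p : partition) : nat -> partition :=
  fun y => if y == x then p else v y.

Fixpoint quant_block (univ : bool) (b : seq nat) (v : nat -> partition)
  (K : (nat -> partition) -> Prop) : Prop :=
  match b with
  | [::] => K v
  | x :: b' => if univ then forall p, quant_block univ b' (upd v x p) K
               else exists p, quant_block univ b' (upd v x p) K
  end.

Fixpoint prenex_sat (univ : bool) (bs : seq (seq nat)) (m : qf)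
  (v : nat -> partition) : Prop :=
  match bs with
  | [::] => qf_sat v m
  | b :: bs' => quant_block univ b v (prenex_sat (~~ univ) bs' m)
  end.

Definition Pi_definable3 (n : nat) (R : partition -> partition -> partition -> Prop) : Prop :=
  exists (bs : seq (seq nat)) (m : qf),
    size bs = n /\
    forall v : nat -> partition, prenex_sat true bs m v <-> R (v 0) (v 1) (v 2).

(* Main.v *)
Require Import Defs.
From mathcomp Require Import all_boot.
From mathcomp Require Import zify.
From Stdlib Require Import Classical FunctionalExtensionality.
Set Implicit Arguments. Unset Strict Implicit. Unset Printing Implicit Defensive.

Notation LE := young_le.
Notation partition := Defs.partition.
Definition r (p : partition) (i : nat) : nat := nth 0 (parts p) i.
Definition height (p : partition) := size (parts p).

Lemma r_pos p i : (0 < r p i) = (i < height p).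
Proof.
case: p => s Hs; rewrite /r /height /=; case/andP: (Hs) => _ Hp.
case: (ltnP i (size s)) => Hi; last by rewrite nth_default.
by have := (all_nthP 0 Hp) i Hi.
Qed.

Lemma r_mono p i j : i <= j -> r p j <= r p i.
Proof.
case: p => s Hs0; rewrite /r /= => Hij; case/andP: (Hs0) => Hs _.
case: (ltnP j (size s)) => Hj; last by rewrite (nth_default _ Hj).
have Hi : i < size s by apply: leq_ltn_trans Hj.
have Ht : transitive geq by move=> a b c /= H1 H2; exact: leq_trans H2 H1.
exact: (@sorted_leq_nth _ geq Ht (fun a => leqnn a) 0 _ Hs i j Hi Hj Hij).
Qed.

Lemma r_ge p i : height p <= i -> r p i = 0.
Proof. move=> H; apply/eqP; rewrite -leqn0 leqNgt r_pos; by rewrite -leqNgt. Qed.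

Lemma le_r a b : LE a b <-> forall i, r a i <= r b i.
Proof.
split.
- move=> [Hs Hi] i. case: (ltnP i (height a)) => H; first exact: Hi.
  by rewrite r_ge.
- move=> H; split; last by move=> i _; apply: H.
  rewrite -/(height a) -/(height b).
  case: (posnP (height a)) => [->//|Ha].
  have H1 : 0 < r a (height a).-1 by rewrite r_pos prednK.
  have : 0 < r b (height a).-1 by apply: leq_trans H1 (H _).
  by rewrite r_pos prednK.
Qed.

Lemma part_ext a b : (forall i, r a i = r b i) -> a = b.
Proof.
move=> H.
have Hs : height a = height b.
  apply/eqP; rewrite eqn_leq; apply/andP; split.
  - case: (posnP (height a)) => [->//|Ha].
    have Hl : (height a).-1 < height a by rewrite prednK.
    have : 0 < r a (height a).-1 by rewrite r_pos.
    rewrite H r_pos => Hb. lia.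
  - case: (posnP (height b)) => [->//|Ha].
    have Hl : (height b).-1 < height b by rewrite prednK.
    have : 0 < r b (height b).-1 by rewrite r_pos.
    rewrite -H r_pos => Hb. lia.
case: a b H Hs => sa Ha [sb Hb] /= H Hs.
have E : sa = sb by apply: (eq_from_nth (x0:=0) Hs) => i _; apply: H.
subst sb. by rewrite (eq_irrelevance Ha Hb).
Qed.

Definition p0 : partition := @Part [::] erefl.
Definition mkP (s : seq nat) : partition :=
  match is_partition s as b return (is_partition s = b -> partition) with
  | true => fun H => @Part s H | false => fun _ => p0 end (@Logic.eq_refl bool (is_partition s)).
Lemma mkP_parts s : is_partition s -> parts (mkP s) = s.
Proof.
move=> H; unfold mkP. generalize (@Logic.eq_refl bool (is_partition s)).
generalize (is_partition s) at 2 3. intros b; destruct b; simpl; auto.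
intros E; rewrite H in E; discriminate.
Qed.

Definition mkR (f : nat -> nat) (n : nat) := mkP (mkseq f n).

Lemma mkR_part f n : (forall i j, i <= j -> f j <= f i) -> (forall i, (0 < f i) = (i < n)) ->
  is_partition (mkseq f n).
Proof.
move=> Hm Hp; apply/andP; split.
- apply: homo_sorted; last exact: iota_sorted.
  move=> x y Hxy. exact: Hm.
- apply/allP => x /mapP [i]; rewrite mem_iota add0n => /andP [_ Hi] ->. by rewrite Hp.
Qed.

Lemma r_mkR f n : (forall i j, i <= j -> f j <= f i) -> (forall i, (0 < f i) = (i < n)) ->
  forall i, r (mkR f n) i = f i.
Proof.
move=> Hm Hp i; rewrite /r /mkR mkP_parts; last exact: mkR_part.
case: (ltnP i n) => Hi; first by rewrite nth_mkseq.
rewrite nth_default ?size_mkseq //. move: (Hp i); rewrite (leq_gtF Hi). by case: (f i).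
Qed.

Lemma height_mkR f n : (forall i j, i <= j -> f j <= f i) -> (forall i, (0 < f i) = (i < n)) ->
  height (mkR f n) = n.
Proof. move=> Hm Hp; rewrite /height /mkR mkP_parts ?size_mkseq //; exact: mkR_part. Qed.

Definition totp a := mkR (fun i => if i == 0 then a else 0) (0 < a).
Definition colp q := mkR (fun i => nat_of_bool (i < q)) q.
Definition rect w h := mkR (fun i => if i < h then w else 0) (if 0 < w then h else 0).
Definition stair n := mkR (fun i => n - i) n.
Definition prog m k := mkR (fun i => (m - i) * k) (if 0 < k then m else 0).

Lemma r_tot a i : r (totp a) i = if i == 0 then a else 0.
Proof.
apply: r_mkR => [x y|x]; first by case: x; case: y => //= *; lia.
by case: x; case: a.
Qed.
Lemma r_col q i : r (colp q) i = (i < q).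
Proof.
apply: r_mkR => [x y Hxy|x]; last by case: (x < q).
case: (ltnP y q) => H; rewrite ?H; first by have -> : x < q by apply: leq_ltn_trans H.
by case: (x < q).
Qed.
Lemma r_rect w h i : r (rect w h) i = if i < h then w else 0.
Proof.
apply: r_mkR => [x y Hxy|x].
- case: (ltnP y h) => H; first by have -> : x < h by apply: leq_ltn_trans H.
  by case: (x < h).
- case: (ltnP x h) => H; case: (posnP w) => Hw; rewrite ?Hw ?ltnn //=; lia.
Qed.
Lemma r_stair n i : r (stair n) i = n - i.
Proof. apply: r_mkR => [x y Hxy|x]; [lia | by rewrite subn_gt0]. Qed.
Lemma r_prog m k i : r (prog m k) i = (m - i) * k.
Proof.
apply: r_mkR => [x y Hxy|x]; first by apply: leq_mul => //; lia.
case: (posnP k) => [->|Hk]; first by rewrite muln0.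
by rewrite muln_gt0 Hk andbT subn_gt0.
Qed.
Lemma height_col q : height (colp q) = q.
Proof.
apply: height_mkR => [x y Hxy|x]; last by case: (x < q).
case: (ltnP y q) => H; rewrite ?H; first by have -> : x < q by apply: leq_ltn_trans H.
by case: (x < q).
Qed.
Lemma height_stair n : height (stair n) = n.
Proof. apply: height_mkR => [x y Hxy|x]; [lia | by rewrite subn_gt0]. Qed.
Lemma height_prog m k : 0 < k -> height (prog m k) = m.
Proof.
move=> Hk; rewrite /prog Hk; apply: height_mkR => [x y Hxy|x]; first by apply: leq_mul => //; lia.
by rewrite muln_gt0 Hk andbT subn_gt0.
Qed.

Lemma r_p11 i : r p11 i = (i < 2).
Proof. rewrite /r /=; case: i => [|[|i]] //=; by rewrite nth_nil. Qed.
Lemma p11_col : p11 = colp 2.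
Proof. apply: part_ext => i. by rewrite r_p11 ?r_col. Qed.

Lemma LE_tot_l a x : LE (totp a) x <-> a <= r x 0.
Proof.
rewrite le_r; split; first by move=> /(_ 0); rewrite r_tot.
by move=> H [|i]; rewrite r_tot.
Qed.
Lemma LE_tot_r x a : LE x (totp a) <-> r x 0 <= a /\ r x 1 = 0.
Proof.
rewrite le_r; split.
- move=> H; split; first by have := H 0; rewrite r_tot.
  by have := H 1; rewrite r_tot /=; lia.
- move=> [H1 H2] [|i]; rewrite r_tot //=.
  have := r_mono x (i:=1) (j:=i.+1) (ltn0Sn _). lia.
Qed.
Lemma TOT_iff x : ~ LE p11 x <-> r x 1 = 0.
Proof.
rewrite le_r; split.
- move=> H; apply/eqP; rewrite -leqn0 leqNgt; apply/negP => H1; apply: H => i.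
  rewrite r_p11; case: i => [|[|i]] //=; have := r_mono x (i:=0) (j:=1) isT.
  move=> H2; lia.
- move=> H1 H; have := H 1; rewrite r_p11 H1 //.
Qed.
Lemma tot_of x : r x 1 = 0 -> x = totp (r x 0).
Proof.
move=> H; apply: part_ext => [[|i]]; rewrite r_tot //=.
have := r_mono x (i:=1) (j:=i.+1) (ltn0Sn _). lia.
Qed.
Lemma tot_inj a b : totp a = totp b -> a = b.
Proof. move=> H; have := r_tot a 0; by rewrite H r_tot. Qed.
Lemma COL_iff x : ~ LE (totp 2) x <-> r x 0 <= 1.
Proof. rewrite LE_tot_l; lia. Qed.
Lemma col_of x : r x 0 <= 1 -> x = colp (height x).
Proof.
move=> H; apply: part_ext => i; rewrite r_col -r_pos.
have := r_mono x (i:=0) (j:=i) (leq0n _). case: (r x i) => [|[|n]] //=; lia.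
Qed.
Lemma col_inj a b : colp a = colp b -> a = b.
Proof. move=> H; have := height_col a; by rewrite H height_col. Qed.
Lemma LE_col_l q x : LE (colp q) x <-> q <= height x.
Proof.
rewrite le_r; split.
- case: q => [|q] // H; have := H q; rewrite r_col ltnSn /= r_pos //.
- move=> H i; rewrite r_col; case: ltnP => //= Hi; rewrite r_pos; exact: leq_trans Hi H.
Qed.
Lemma LE_col_r x q : LE x (colp q) <-> r x 0 <= 1 /\ height x <= q.
Proof.
split.
- move=> H; split; first by move: H; rewrite le_r => /(_ 0); rewrite r_col; case: (0 < q) => /= H0; lia.
  have := height_col q. move: H => [Hs _]. rewrite /height in Hs *. lia.
- move=> [H1 H2]; rewrite (col_of H1) LE_col_l height_col //.
Qed.

Lemma height_rect w h : height (rect w h) = if 0 < w then h else 0.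
Proof.
apply: height_mkR => [x y Hxy|x].
- case: (ltnP y h) => H; first by have -> : x < h by apply: leq_ltn_trans H.
  by case: (x < h).
- case: (ltnP x h) => H; case: (posnP w) => Hw; rewrite ?Hw ?ltnn //=; lia.
Qed.

Definition IN a b c := forall z, (LE a z \/ LE b z) \/ LE z c.
Definition NIN a b c := exists z, (~ LE a z /\ ~ LE b z) /\ ~ LE z c.
Definition COV x y := (LE x y /\ ~ x = y) /\ (forall z, (~ LE x z \/ ~ LE z y) \/ (z = x \/ z = y)).
Definition NCOV x y := (~ LE x y \/ x = y) \/ (exists z, (LE x z /\ LE z y) /\ (~ z = x /\ ~ z = y)).
Definition ROWLE L X := forall z, (LE p11 z \/ ~ LE z L) \/ LE z X.
Definition NROWLE L X := exists z, (~ LE p11 z /\ LE z L) /\ ~ LE z X.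

Lemma NIN_iff a b c : NIN a b c <-> ~ IN a b c.
Proof.
split; first by move=> [z [[H1 H2] H3]] H; case: (H z) => [[]|]; auto.
move=> H; apply: NNPP => H'; apply: H => z.
case: (classic (LE a z)) => Ha; first by auto.
case: (classic (LE b z)) => Hb; first by auto.
case: (classic (LE z c)) => Hc; first by auto.
by exfalso; apply: H'; exists z.
Qed.
Lemma NCOV_iff x y : NCOV x y <-> ~ COV x y.
Proof.
split.
- move=> [[H|H]|[z [[H1 H2] [H3 H4]]]] [[H5 H6] H7] //.
  by case: (H7 z) => [[]|[]].
- move=> H; apply: NNPP => H'; apply: H; split.
  + split; [apply: NNPP | ]; move=> H0; apply: H'; [by left; left | by left; right].
  + move=> z.
    case: (classic (LE x z)) => Ha; last by auto.
    case: (classic (LE z y)) => Hb; last by auto.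
    case: (classic (z = x)) => Hc; first by auto.
    case: (classic (z = y)) => Hd; first by auto.
    by exfalso; apply: H'; right; exists z.
Qed.
Lemma NROWLE_iff L X : NROWLE L X <-> ~ ROWLE L X.
Proof.
split; first by move=> [z [[H1 H2] H3]] H; case: (H z) => [[]|]; auto.
move=> H; apply: NNPP => H'; apply: H => z.
case: (classic (LE p11 z)) => Ha; first by auto.
case: (classic (LE z L)) => Hb; last by auto.
case: (classic (LE z X)) => Hc; first by auto.
by exfalso; apply: H'; exists z.
Qed.

Lemma IN_iff p q L : IN (totp p) (colp q) L <-> p <= 1 \/ q <= 1 \/ p.-1 <= r L (q-2).
Proof.
split.
- move=> H; apply: NNPP => H'.
  have Hp : 2 <= p by lia. have Hq : 2 <= q by lia.
  have Hl : r L (q-2) < p.-1 by lia.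
  case: (H (rect p.-1 q.-1)) => [[]|].
  + rewrite LE_tot_l r_rect. case: ifP => _; lia.
  + rewrite LE_col_l height_rect. case: ifP => _; lia.
  + rewrite le_r => /(_ (q-2)). rewrite r_rect. have -> : q - 2 < q.-1 by lia. lia.
- move=> H z.
  case: (classic (LE (totp p) z)) => Ha; first by auto.
  case: (classic (LE (colp q) z)) => Hb; first by auto.
  right; move: Ha Hb; rewrite LE_tot_l LE_col_l le_r => Ha Hb i.
  case: (ltnP i (height z)) => Hi; last by rewrite r_ge.
  have H0 := r_mono z (leq0n i).
  case: H => [H|[H|H]]; first lia.
  + lia.
  + have := r_mono L (i:=i) (j:=q-2); lia.
Qed.

Lemma ROWLE_iff L X : ROWLE L X <-> r L 0 <= r X 0.
Proof.
split.
- move=> /(_ (totp (r L 0))) [[]|].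
  + move=> H; exfalso; apply: (proj2 (TOT_iff (totp (r L 0)))) H; by rewrite r_tot.
  + by move=> H; exfalso; apply: H; rewrite le_r => i; rewrite r_tot; case: i => //= i; lia.
  + by rewrite le_r => /(_ 0); rewrite r_tot.
- move=> H z.
  case: (classic (LE p11 z)) => Ha; first by auto.
  case: (classic (LE z L)) => Hb; last by auto.
  right; move/TOT_iff: Ha => Ha; rewrite (tot_of Ha) LE_tot_l.
  move: Hb; rewrite le_r => /(_ 0) Hb; lia.
Qed.

Lemma COV_tot a b : COV (totp a) (totp b) <-> b = a.+1.
Proof.
split.
- move=> [[H1 H2] H3]; move: H1; rewrite LE_tot_l r_tot /= => H1.
  have Hne : a <> b by move=> E; apply: H2; rewrite E.
  apply: NNPP => H4.
  case: (H3 (totp a.+1)) => [[H|H]|[H|H]].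
  + by apply: H; rewrite LE_tot_l r_tot.
  + apply: H; rewrite LE_tot_r !r_tot /=; split => //; lia.
  + move/tot_inj: H; lia.
  + move/tot_inj: H; lia.
- move=> ->; split; first split.
  + by rewrite LE_tot_l r_tot.
  + by move/tot_inj; lia.
  + move=> z.
    case: (classic (LE (totp a) z)) => Ha; last by auto.
    case: (classic (LE z (totp a.+1))) => Hb; last by auto.
    right; move: Ha Hb; rewrite LE_tot_l LE_tot_r => Ha [Hb Hc].
    rewrite (tot_of Hc); have : r z 0 = a \/ r z 0 = a.+1 by lia.
    by case => ->; auto.
Qed.

Lemma COV_col a b : COV (colp a) (colp b) <-> b = a.+1.
Proof.
split.
- move=> [[H1 H2] H3]; move: H1; rewrite LE_col_l height_col => H1.
  have Hne : a <> b by move=> E; apply: H2; rewrite E.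
  apply: NNPP => H4.
  case: (H3 (colp a.+1)) => [[H|H]|[H|H]].
  + by apply: H; rewrite LE_col_l height_col.
  + apply: H; rewrite LE_col_r r_col height_col /=; split => //; lia.
  + move/col_inj: H; lia.
  + move/col_inj: H; lia.
- move=> ->; split; first split.
  + by rewrite LE_col_l height_col.
  + by move/col_inj; lia.
  + move=> z.
    case: (classic (LE (colp a) z)) => Ha; last by auto.
    case: (classic (LE z (colp a.+1))) => Hb; last by auto.
    right; move: Ha Hb; rewrite LE_col_l LE_col_r => Ha [Hb Hc].
    rewrite (col_of Hb); have : height z = a \/ height z = a.+1 by lia.
    by case => ->; auto.
Qed.


Inductive bf := BQ of qf | BAll of nat & qf | BEx of nat & bf | BAnd of bf & bf | BOr of bf & bf.

Fixpoint bsat (v : nat -> partition) (f : bf) : Prop :=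
  match f with
  | BQ m => qf_sat v m
  | BAll x m => forall p, qf_sat (upd v x p) m
  | BEx x g => exists p, bsat (upd v x p) g
  | BAnd f g => bsat v f /\ bsat v g
  | BOr f g => bsat v f \/ bsat v g
  end.

Definition tvars (t : term) := match t with TVar x => [:: x] | TConst => [::] end.
Fixpoint qvars (m : qf) : seq nat :=
  match m with
  | QTrue | QFalse => [::]
  | QLe a b | QEq a b => tvars a ++ tvars b
  | QNot g => qvars g
  | QAnd g h | QOr g h => qvars g ++ qvars h
  end.
Fixpoint bvars f :=
  match f with BQ m => qvars m | BAll x m => x :: qvars m | BEx x g => x :: bvars g
  | BAnd f g | BOr f g => bvars f ++ bvars g end.
Fixpoint Evars f :=
  match f with BEx x g => x :: Evars g | BAnd f g | BOr f g => Evars f ++ Evars g | _ => [::] end.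
Fixpoint Avars f :=
  match f with BAll x _ => [:: x] | BEx _ g => Avars g | BAnd f g | BOr f g => Avars f ++ Avars g
  | _ => [::] end.
Fixpoint Mat f :=
  match f with BQ m => m | BAll _ m => m | BEx _ g => Mat g | BAnd f g => QAnd (Mat f) (Mat g)
  | BOr f g => QOr (Mat f) (Mat g) end.
Fixpoint wf f :=
  match f with
  | BEx _ g => wf g
  | BAnd f g | BOr f g => [&& wf f, wf g, all (fun y => y \notin bvars g) (Evars f ++ Avars f)
                             & all (fun y => y \notin bvars f) (Evars g ++ Avars g)]
  | _ => true end.

Definition S2 (E A : seq nat) (m : qf) (v : nat -> partition) :=
  exists w, (forall y, y \notin E -> w y = v y) /\
    forall w', (forall y, y \notin A -> w' y = w y) -> qf_sat w' m.

Lemma term_ext v w t : (forall y, y \in tvars t -> v y = w y) -> eval_term v t = eval_term w t.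
Proof. case: t => [x|] //= H; apply: H; exact: mem_head. Qed.

Lemma qf_ext v w m : (forall y, y \in qvars m -> v y = w y) -> (qf_sat v m <-> qf_sat w m).
Proof.
elim: m => [||a b|a b|g IH|g IHg h IHh|g IHg h IHh] //= H.
- rewrite (term_ext (v:=v) (w:=w) (t:=a)) ?(term_ext (v:=v) (w:=w) (t:=b)) //;
  move=> y Hy; apply: H; rewrite mem_cat Hy ?orbT //.
- rewrite (term_ext (v:=v) (w:=w) (t:=a)) ?(term_ext (v:=v) (w:=w) (t:=b)) //;
  move=> y Hy; apply: H; rewrite mem_cat Hy ?orbT //.
- by rewrite IH.
- rewrite IHg ?IHh //; move=> y Hy; apply: H; rewrite mem_cat Hy ?orbT //.
- rewrite IHg ?IHh //; move=> y Hy; apply: H; rewrite mem_cat Hy ?orbT //.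
Qed.

Lemma Mat_vars f : {subset qvars (Mat f) <= bvars f}.
Proof.
elim: f => [m|x m|x g IH|f IHf g IHg|f IHf g IHg] y //=.
- by move=> H; rewrite in_cons H orbT.
- by move=> H; rewrite in_cons IH ?orbT.
- by rewrite !mem_cat => /orP [/IHf ->|/IHg ->]; rewrite ?orbT.
- by rewrite !mem_cat => /orP [/IHf ->|/IHg ->]; rewrite ?orbT.
Qed.
Lemma Evars_vars f : {subset Evars f <= bvars f}.
Proof.
elim: f => [m|x m|x g IH|f IHf g IHg|f IHf g IHg] y //=.
- by rewrite !in_cons => /orP [->|/IH ->]; rewrite ?orbT.
- by rewrite !mem_cat => /orP [/IHf ->|/IHg ->]; rewrite ?orbT.
- by rewrite !mem_cat => /orP [/IHf ->|/IHg ->]; rewrite ?orbT.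
Qed.
Lemma Avars_vars f : {subset Avars f <= bvars f}.
Proof.
elim: f => [m|x m|x g IH|f IHf g IHg|f IHf g IHg] y //=.
- by rewrite !in_cons => /orP [->|]; rewrite ?orbT.
- by move/IH; rewrite in_cons => ->; rewrite orbT.
- by rewrite !mem_cat => /orP [/IHf ->|/IHg ->]; rewrite ?orbT.
- by rewrite !mem_cat => /orP [/IHf ->|/IHg ->]; rewrite ?orbT.
Qed.

Section Transfer.
Variables (f g : bf) (v w wf1 wg w' u : nat -> partition).
Hypothesis Hfg : all (fun y => y \notin bvars g) (Evars f ++ Avars f).
Hypothesis Hgf : all (fun y => y \notin bvars f) (Evars g ++ Avars g).
Hypothesis Hwf : forall y, y \notin Evars f -> wf1 y = v y.
Hypothesis Hwg : forall y, y \notin Evars g -> wg y = v y.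
Hypothesis Hw1 : forall y, y \in Evars f -> w y = wf1 y.
Hypothesis Hw2 : forall y, y \notin Evars f -> y \in Evars g -> w y = wg y.
Hypothesis Hw3 : forall y, y \notin Evars f -> y \notin Evars g -> w y = v y.
Hypothesis Hw' : forall y, y \notin Avars f ++ Avars g -> w' y = w y.

Lemma notin_g y : y \in bvars f -> (y \notin Evars g) && (y \notin Avars g).
Proof.
move=> Hy; apply/andP; split; apply/negP => H; move/allP: Hgf => /(_ y);
  rewrite mem_cat H ?orbT /= => /(_ isT); by rewrite Hy.
Qed.
Lemma notin_f y : y \in bvars g -> (y \notin Evars f) && (y \notin Avars f).
Proof.
move=> Hy; apply/andP; split; apply/negP => H; move/allP: Hfg => /(_ y);
  rewrite mem_cat H ?orbT /= => /(_ isT); by rewrite Hy.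
Qed.

Lemma transfer_f : (forall y, y \in Avars f -> u y = w' y) ->
  (forall y, y \notin Avars f -> u y = wf1 y) -> (qf_sat w' (Mat f) <-> qf_sat u (Mat f)).
Proof using Hfg Hgf Hwf Hwg Hw1 Hw2 Hw3 Hw'.
move=> Hu1 Hu2; apply: qf_ext => y /Mat_vars Hy.
case/andP: (notin_g Hy) => HE HA.
case: (boolP (y \in Avars f)) => Ha; first by rewrite Hu1.
rewrite Hu2 // Hw' ?mem_cat ?negb_or ?Ha //.
case: (boolP (y \in Evars f)) => He; first by rewrite Hw1.
by rewrite Hw3 // Hwf.
Qed.
Lemma transfer_g : (forall y, y \in Avars g -> u y = w' y) ->
  (forall y, y \notin Avars g -> u y = wg y) -> (qf_sat w' (Mat g) <-> qf_sat u (Mat g)).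
Proof using Hfg Hgf Hwf Hwg Hw1 Hw2 Hw3 Hw'.
move=> Hu1 Hu2; apply: qf_ext => y /Mat_vars Hy.
case/andP: (notin_f Hy) => HE HA.
case: (boolP (y \in Avars g)) => Ha; first by rewrite Hu1.
rewrite Hu2 // Hw'; last by rewrite mem_cat negb_or HA Ha.
case: (boolP (y \in Evars g)) => He; first by rewrite Hw2.
by rewrite Hw3 // Hwg.
Qed.
End Transfer.

Lemma notin_cons (y x : nat) (s : seq nat) : y != x -> y \notin s -> y \notin x :: s.
Proof. by rewrite in_cons negb_or => -> ->. Qed.

Lemma S2_correct f v : wf f -> (bsat v f <-> S2 (Evars f) (Avars f) (Mat f) v).
Proof.
elim: f v => [m|x m|x g IH|f IHf g IHg|f IHf g IHg] v /=.
- move=> _; split.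
  + move=> H; exists v; split => // w' Hw'; apply/(qf_ext (v:=v)) => // y _; by rewrite Hw'.
  + move=> [w [Hw H]]; apply/(qf_ext (v:=w)) => [y _|]; first by rewrite Hw.
    by apply: H.
- move=> _; split.
  + move=> H; exists v; split => // w' Hw'; apply/(qf_ext (v:=upd v x (w' x))); last exact: H.
    move=> y _; rewrite /upd; case: eqP => [->//|/eqP Hy]; rewrite Hw' //; exact: notin_cons.
  + move=> [w [Hw H]] p; apply: H => y; rewrite in_cons negb_or => /andP [Hy _].
    by rewrite /upd (negbTE Hy) Hw.
- move=> Hg; split.
  + move=> [p /(IH _ Hg) [w [Hw H]]]; exists w; split => // y; rewrite in_cons negb_or => /andP [Hy1 Hy2].
    by rewrite Hw // /upd (negbTE Hy1).
  + move=> [w [Hw H]]; exists (w x); apply/IH => //; exists w; split => // y Hy.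
    rewrite /upd; case: eqP => [->//|/eqP Hyx]; rewrite Hw //; exact: notin_cons.
- move=> /and4P [Hf Hg Hfg Hgf]; rewrite IHf // IHg //; apply: iff_sym; split.
  + move=> [w [Hw H]].
    set wf1 := fun y => if y \in Evars f then w y else v y.
    set wg := fun y => if y \in Evars g then w y else v y.
    have H1 : forall y, y \in Evars f -> w y = wf1 y by move=> y Hy; rewrite /wf1 Hy.
    have H2 : forall y, y \notin Evars f -> y \in Evars g -> w y = wg y by move=> y _ Hy; rewrite /wg Hy.
    have H3 : forall y, y \notin Evars f -> y \notin Evars g -> w y = v y.
      by move=> y Hy1 Hy2; rewrite Hw // mem_cat negb_or Hy1.
    have Hwf : forall y, y \notin Evars f -> wf1 y = v y by move=> y Hy; rewrite /wf1 (negbTE Hy).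
    have Hwg : forall y, y \notin Evars g -> wg y = v y by move=> y Hy; rewrite /wg (negbTE Hy).
    split.
    * exists wf1; split => // w'f Hw'f.
      set w' := fun y => if y \in Avars f then w'f y else w y.
      have Hw' : forall y, y \notin Avars f ++ Avars g -> w' y = w y.
        by move=> y; rewrite mem_cat negb_or => /andP [Hy _]; rewrite /w' (negbTE Hy).
      have := H w' Hw' => /= [[Hm _]].
      have Hu1 : forall y, y \in Avars f -> w'f y = w' y by move=> y Hy; rewrite /w' Hy.
      have Hu2 : forall y, y \notin Avars f -> w'f y = wf1 y by move=> y Hy; rewrite Hw'f.
      exact: (proj1 (transfer_f Hfg Hgf Hwf Hwg H1 H2 H3 Hw' Hu1 Hu2) Hm).
    * exists wg; split => // w'g Hw'g.
      set w' := fun y => if y \in Avars g then w'g y else w y.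
      have Hw' : forall y, y \notin Avars f ++ Avars g -> w' y = w y.
        by move=> y; rewrite mem_cat negb_or => /andP [_ Hy]; rewrite /w' (negbTE Hy).
      have := H w' Hw' => /= [[_ Hm]].
      have Hu1 : forall y, y \in Avars g -> w'g y = w' y by move=> y Hy; rewrite /w' Hy.
      have Hu2 : forall y, y \notin Avars g -> w'g y = wg y by move=> y Hy; rewrite Hw'g.
      exact: (proj1 (transfer_g Hfg Hgf Hwf Hwg H1 H2 H3 Hw' Hu1 Hu2) Hm).
  + move=> [[wf1 [Hwf Hf1]] [wg [Hwg Hg1]]].
    set w := fun y => if y \in Evars f then wf1 y else if y \in Evars g then wg y else v y.
    have H1 : forall y, y \in Evars f -> w y = wf1 y by move=> y Hy; rewrite /w Hy.
    have H2 : forall y, y \notin Evars f -> y \in Evars g -> w y = wg y.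
      by move=> y Hy1 Hy; rewrite /w (negbTE Hy1) Hy.
    have H3 : forall y, y \notin Evars f -> y \notin Evars g -> w y = v y.
      by move=> y Hy1 Hy2; rewrite /w (negbTE Hy1) (negbTE Hy2).
    exists w; split.
    * by move=> y; rewrite mem_cat negb_or => /andP [Hy1 Hy2]; apply: H3.
    * move=> w' Hw' /=; split.
      - set u := fun y => if y \in Avars f then w' y else wf1 y.
        have Hu1 : forall y, y \in Avars f -> u y = w' y by move=> y Hy; rewrite /u Hy.
        have Hu2 : forall y, y \notin Avars f -> u y = wf1 y by move=> y Hy; rewrite /u (negbTE Hy).
        apply: (proj2 (transfer_f Hfg Hgf Hwf Hwg H1 H2 H3 Hw' Hu1 Hu2)).
        apply: Hf1 => y Hy; by rewrite Hu2.
      - set u := fun y => if y \in Avars g then w' y else wg y.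
        have Hu1 : forall y, y \in Avars g -> u y = w' y by move=> y Hy; rewrite /u Hy.
        have Hu2 : forall y, y \notin Avars g -> u y = wg y by move=> y Hy; rewrite /u (negbTE Hy).
        apply: (proj2 (transfer_g Hfg Hgf Hwf Hwg H1 H2 H3 Hw' Hu1 Hu2)).
        apply: Hg1 => y Hy; by rewrite Hu2.
- move=> /and4P [Hf Hg Hfg Hgf]; apply: iff_sym; split.
  + move=> [w [Hw H]].
    set wf1 := fun y => if y \in Evars f then w y else v y.
    set wg := fun y => if y \in Evars g then w y else v y.
    have H1 : forall y, y \in Evars f -> w y = wf1 y by move=> y Hy; rewrite /wf1 Hy.
    have H2 : forall y, y \notin Evars f -> y \in Evars g -> w y = wg y by move=> y _ Hy; rewrite /wg Hy.
    have H3 : forall y, y \notin Evars f -> y \notin Evars g -> w y = v y.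
      by move=> y Hy1 Hy2; rewrite Hw // mem_cat negb_or Hy1.
    have Hwf : forall y, y \notin Evars f -> wf1 y = v y by move=> y Hy; rewrite /wf1 (negbTE Hy).
    have Hwg : forall y, y \notin Evars g -> wg y = v y by move=> y Hy; rewrite /wg (negbTE Hy).
    apply: NNPP => /not_or_and [Nf Ng].
    have [w'f [Hw'f Nmf]] : exists w'f, (forall y, y \notin Avars f -> w'f y = wf1 y) /\ ~ qf_sat w'f (Mat f).
      apply: NNPP => Hc; apply: Nf; apply/(IHf v Hf); exists wf1; split => // w'' Hw''.
      apply: NNPP => Hn; apply: Hc; by exists w''.
    have [w'g [Hw'g Nmg]] : exists w'g, (forall y, y \notin Avars g -> w'g y = wg y) /\ ~ qf_sat w'g (Mat g).
      apply: NNPP => Hc; apply: Ng; apply/(IHg v Hg); exists wg; split => // w'' Hw''.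
      apply: NNPP => Hn; apply: Hc; by exists w''.
    set w' := fun y => if y \in Avars f then w'f y else if y \in Avars g then w'g y else w y.
    have Hw' : forall y, y \notin Avars f ++ Avars g -> w' y = w y.
      by move=> y; rewrite mem_cat negb_or => /andP [Hy1 Hy2]; rewrite /w' (negbTE Hy1) (negbTE Hy2).
    have := H w' Hw' => /= [[Hm|Hm]].
    * apply: Nmf.
      have Hu1 : forall y, y \in Avars f -> w'f y = w' y by move=> y Hy; rewrite /w' Hy.
      have Hu2 : forall y, y \notin Avars f -> w'f y = wf1 y by move=> y Hy; rewrite Hw'f.
      exact: (proj1 (transfer_f Hfg Hgf Hwf Hwg H1 H2 H3 Hw' Hu1 Hu2) Hm).
    * apply: Nmg.
      have Hu1 : forall y, y \in Avars g -> w'g y = w' y.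
        move=> y Hy; have Hy' : y \notin Avars f.
          apply/negP => Hf'; move/allP: Hfg => /(_ y); rewrite mem_cat Hf' orbT => /(_ isT).
          by rewrite (Avars_vars Hy).
        by rewrite /w' (negbTE Hy') Hy.
      have Hu2 : forall y, y \notin Avars g -> w'g y = wg y by move=> y Hy; rewrite Hw'g.
      exact: (proj1 (transfer_g Hfg Hgf Hwf Hwg H1 H2 H3 Hw' Hu1 Hu2) Hm).
  + move=> Hor.
    have [wf1 [Hwf Hf1]] : exists wf1, (forall y, y \notin Evars f -> wf1 y = v y) /\
        (bsat v f -> forall w', (forall y, y \notin Avars f -> w' y = wf1 y) -> qf_sat w' (Mat f)).
      case: (classic (S2 (Evars f) (Avars f) (Mat f) v)) => [[w1 [H1 H2]]|N]; first by exists w1.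
      by exists v; split => // Hb; exfalso; apply: N; apply/(IHf v Hf).
    have [wg [Hwg Hg1]] : exists wg, (forall y, y \notin Evars g -> wg y = v y) /\
        (bsat v g -> forall w', (forall y, y \notin Avars g -> w' y = wg y) -> qf_sat w' (Mat g)).
      case: (classic (S2 (Evars g) (Avars g) (Mat g) v)) => [[w1 [H1 H2]]|N]; first by exists w1.
      by exists v; split => // Hb; exfalso; apply: N; apply/(IHg v Hg).
    set w := fun y => if y \in Evars f then wf1 y else if y \in Evars g then wg y else v y.
    have H1 : forall y, y \in Evars f -> w y = wf1 y by move=> y Hy; rewrite /w Hy.
    have H2 : forall y, y \notin Evars f -> y \in Evars g -> w y = wg y.
      by move=> y Hy1 Hy; rewrite /w (negbTE Hy1) Hy.
    have H3 : forall y, y \notin Evars f -> y \notin Evars g -> w y = v y.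
      by move=> y Hy1 Hy2; rewrite /w (negbTE Hy1) (negbTE Hy2).
    exists w; split.
    * by move=> y; rewrite mem_cat negb_or => /andP [Hy1 Hy2]; apply: H3.
    * move=> w' Hw' /=.
      case: Hor => Hb; [left|right].
      - set u := fun y => if y \in Avars f then w' y else wf1 y.
        have Hu1 : forall y, y \in Avars f -> u y = w' y by move=> y Hy; rewrite /u Hy.
        have Hu2 : forall y, y \notin Avars f -> u y = wf1 y by move=> y Hy; rewrite /u (negbTE Hy).
        apply: (proj2 (transfer_f Hfg Hgf Hwf Hwg H1 H2 H3 Hw' Hu1 Hu2)).
        apply: Hf1 => // y Hy; by rewrite Hu2.
      - set u := fun y => if y \in Avars g then w' y else wg y.
        have Hu1 : forall y, y \in Avars g -> u y = w' y by move=> y Hy; rewrite /u Hy.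
        have Hu2 : forall y, y \notin Avars g -> u y = wg y by move=> y Hy; rewrite /u (negbTE Hy).
        apply: (proj2 (transfer_g Hfg Hgf Hwf Hwg H1 H2 H3 Hw' Hu1 Hu2)).
        apply: Hg1 => // y Hy; by rewrite Hu2.
Qed.

Lemma qb_all b v K : quant_block true b v K <-> forall w, (forall y, y \notin b -> w y = v y) -> K w.
Proof.
elim: b v => [|x b IH] v /=.
- split; last by apply; move=> y.
  move=> H w Hw; have -> : w = v by apply: functional_extensionality => y; apply: Hw.
  exact: H.
- split.
  + move=> H w Hw; have := H (w x); rewrite IH; apply => y Hy.
    rewrite /upd; case: eqP => [->//|/eqP Hyx]; rewrite Hw //; exact: notin_cons.
  + move=> H p; rewrite IH => w Hw; apply: H => y; rewrite in_cons negb_or => /andP [Hy1 Hy2].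
    by rewrite Hw // /upd (negbTE Hy1).
Qed.

Lemma qb_ex b v K : quant_block false b v K <-> exists w, (forall y, y \notin b -> w y = v y) /\ K w.
Proof.
elim: b v => [|x b IH] v /=.
- split; first by move=> H; exists v.
  move=> [w [Hw H]]; have <- : w = v by apply: functional_extensionality => y; apply: Hw.
  exact: H.
- split.
  + move=> [p]; rewrite IH => [[w [Hw H]]]; exists w; split => // y.
    rewrite in_cons negb_or => /andP [Hy1 Hy2]; by rewrite Hw // /upd (negbTE Hy1).
  + move=> [w [Hw H]]; exists (w x); rewrite IH; exists w; split => // y Hy.
    rewrite /upd; case: eqP => [->//|/eqP Hyx]; rewrite Hw //; exact: notin_cons.
Qed.

Lemma prenex3 G f v : wf f ->
  (prenex_sat true [:: G; Evars f; Avars f] (Mat f) v <->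
   forall w, (forall y, y \notin G -> w y = v y) -> bsat w f).
Proof.
move=> Hf /=; rewrite qb_all; split => H w Hw.
- apply/S2_correct => //; move: (H w Hw); rewrite qb_ex => [[w1 [Hw1 H1]]].
  exists w1; split => // w' Hw'; move: H1; rewrite qb_all => H1; exact: H1.
- have := H w Hw; move/(S2_correct w Hf) => [w1 [Hw1 H1]]; rewrite qb_ex; exists w1; split => //.
  rewrite qb_all => w' Hw'; exact: H1.
Qed.

Notation V := TVar.
Notation Cst := TConst.

Definition fIN P Q L z := BAll z (QOr (QOr (QLe P (V z)) (QLe Q (V z))) (QLe (V z) L)).
Definition fNIN P Q L z :=
  BEx z (BQ (QAnd (QAnd (QNot (QLe P (V z))) (QNot (QLe Q (V z)))) (QNot (QLe (V z) L)))).
Definition fCOV x y z := BAnd (BQ (QAnd (QLe x y) (QNot (QEq x y))))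
  (BAll z (QOr (QOr (QNot (QLe x (V z))) (QNot (QLe (V z) y))) (QOr (QEq (V z) x) (QEq (V z) y)))).
Definition fNCOV x y z := BOr (BQ (QOr (QNot (QLe x y)) (QEq x y)))
  (BEx z (BQ (QAnd (QAnd (QLe x (V z)) (QLe (V z) y)) (QAnd (QNot (QEq (V z) x)) (QNot (QEq (V z) y)))))).
Definition fROWLE L X z := BAll z (QOr (QOr (QLe Cst (V z)) (QNot (QLe (V z) L))) (QLe (V z) X)).
Definition fNROWLE L X z :=
  BEx z (BQ (QAnd (QAnd (QNot (QLe Cst (V z))) (QLe (V z) L)) (QNot (QLe (V z) X)))).

Definition fNSTAIR t D b :=
  let P := V b in let P' := V b.+1 in let Q := V b.+2 in let Q' := V b.+3 in
  BEx b (BEx b.+1 (BEx b.+2 (BEx b.+3 (BAnd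
   (BAnd (BQ (QAnd (QAnd (QAnd (QNot (QLe Cst P)) (QNot (QLe Cst P'))) (QLe t P))
                   (QAnd (QAnd (QNot (QLe t Q)) (QNot (QLe t Q'))) (QLe Cst Q))))
         (BAnd (fCOV P P' (b+4)) (fCOV Q Q' (b+5))))
   (BAnd (fIN P Q D (b+6)) (BOr (BAnd (fIN P Q' D (b+7)) (fNIN P' Q D (b+8)))
                               (BAnd (fNIN P Q' D (b+9)) (fIN P' Q D (b+10))))))))).

Fixpoint qands (s : seq qf) : qf :=
  match s with [::] => QTrue | [:: a] => a | a :: s => QAnd a (qands s) end.

Definition vR := V 0. Definition vS := V 1. Definition vPi := V 2. Definition vt := V 3.
Definition vs := V 4. Definition vSt := V 5. Definition vQ1 := V 6. Definition vDm := V 7.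
Definition vDM := V 8. Definition vD' := V 9. Definition vmu := V 10.

Definition N_t := BOr (BQ (QOr (QLe Cst vt) (QLe vt Cst)))
  (BEx 100 (BQ (QAnd (QAnd (QNot (QLe Cst (V 100))) (QNot (QLe (V 100) Cst))) (QNot (QLe vt (V 100)))))).
Definition N_s := BOr (BQ (QLe Cst vs)) (fNCOV vS vs 110).
Definition N_S := BOr (fNSTAIR vt vSt 200) (BOr (BQ (QNot (QLe vs vSt))) (fNROWLE vSt vs 120)).
Definition N_Q := BOr (BQ (QOr (QLe vt vQ1) (QNot (QLe vQ1 vSt))))
  (BEx 130 (BQ (QAnd (QAnd (QNot (QLe vt (V 130))) (QLe (V 130) vSt)) (QNot (QLe (V 130) vQ1))))).
Definition N_Dm := BOr (fNSTAIR vt vDm 220) (BOr (BQ (QNot (QLe vR vDm))) (fNROWLE vDm vR 140)).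
Definition NDREL := BEx 160 (BAnd (BQ (QNot (QLe Cst (V 160))))
  (BOr (BAnd (fIN (V 160) Cst vD' 161) (fNIN (V 160) vQ1 vDM 162))
       (BAnd (fNIN (V 160) Cst vD' 163) (fIN (V 160) vQ1 vDM 164)))).
Definition NMU2 := BEx 170 (BQ (QAnd (QNot (QLe vt (V 170)))
  (QOr (QAnd (QLe (V 170) vmu) (QNot (QLe (V 170) vDm))) (QAnd (QNot (QLe (V 170) vmu)) (QLe (V 170) vDm))))).
Definition NMU3 := BEx 180 (BAnd (BQ (QNot (QLe vt (V 180))))
  (BAnd (fIN vt (V 180) vmu 181) (fNIN vs (V 180) vmu 182))).
Definition NMU4_hyps :=
  let H := V 300 in let H' := V 301 in let W := V 302 in let W' := V 303 in let I := V 304 in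
  let X := V 305 in let X' := V 306 in let U := V 307 in let U' := V 308 in
  BAnd (BQ (qands [:: QNot (QLe vt H); QNot (QLe vt H'); QNot (QLe Cst W); QNot (QLe Cst W');
                      QLe vt W; QNot (QLe vt I); QNot (QLe Cst X); QNot (QLe Cst X');
                      QNot (QLe Cst U); QNot (QLe Cst U')]))
       (BAnd (fCOV H H' 310) (BAnd (fCOV W W' 311) (BAnd (fCOV X X' 312) (fCOV U U' 313)))).
Definition NMU4_ins :=
  let H := V 300 in let H' := V 301 in let W := V 302 in let W' := V 303 in let I := V 304 in
  let X := V 305 in let X' := V 306 in let U := V 307 in let U' := V 308 in
  BAnd (fIN W H vmu 320) (BAnd (fNIN W' H vmu 321) (BAnd (fIN W I vDM 322)
    (BAnd (fNIN W' I vDM 323) (BAnd (fIN X H' vmu 324) (BAnd (fNIN X' H' vmu 325)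
    (BAnd (fIN U I vD' 326) (fNIN U' I vD' 327))))))).
Definition NMU4 :=
  BEx 300 (BEx 301 (BEx 302 (BEx 303 (BEx 304 (BEx 305 (BEx 306 (BEx 307 (BEx 308
  (BAnd NMU4_hyps (BAnd NMU4_ins (BQ (QNot (QEq (V 306) (V 307)))))))))))))).
Definition N_5 := BAnd (BQ (QLe vt vs)) (BOr (fNSTAIR vt vDM 240) (BOr (fNSTAIR vt vD' 260)
  (BOr NDREL (BOr (fNROWLE vmu vDM 150) (BOr NMU2 (BOr NMU3 NMU4)))))).
Definition NotDef := BOr N_t (BOr N_s (BOr N_S (BOr N_Q (BOr N_Dm N_5)))).
Definition Body := BAnd (BOr (BQ (QNot (QLe vt vs))) (BAnd (BQ (QLe vPi vmu)) (fROWLE vmu vPi 190)))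
  (BQ (QOr (QLe vt vs) (QLe vPi vS))).
Definition Fm := BAnd (BQ (QAnd (QAnd (QNot (QLe Cst vR)) (QNot (QLe Cst vS))) (QNot (QLe Cst vPi))))
  (BOr NotDef Body).

Lemma wfF : wf Fm.
Proof. by vm_compute. Qed.

Definition NSTAIR t D := exists P P' Q Q',
  ((((~LE p11 P /\ ~LE p11 P') /\ LE t P) /\ ((~LE t Q /\ ~LE t Q') /\ LE p11 Q)) /\
    (COV P P' /\ COV Q Q')) /\
  (IN P Q D /\ ((IN P Q' D /\ NIN P' Q D) \/ (NIN P Q' D /\ IN P' Q D))).
Definition SNt t := (LE p11 t \/ LE t p11) \/ exists z, (~LE p11 z /\ ~LE z p11) /\ ~LE t z.
Definition SNs sg s := LE p11 s \/ NCOV sg s.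
Definition SNS t s S := NSTAIR t S \/ (~ LE s S \/ NROWLE S s).
Definition SNQ t S Q1 := (LE t Q1 \/ ~ LE Q1 S) \/ exists z, (~LE t z /\ LE z S) /\ ~LE z Q1.
Definition SNDm t rh Dm := NSTAIR t Dm \/ (~LE rh Dm \/ NROWLE Dm rh).
Definition SNDREL Q1 DM D' := exists P, ~LE p11 P /\
  ((IN P p11 D' /\ NIN P Q1 DM) \/ (NIN P p11 D' /\ IN P Q1 DM)).
Definition SNMU2 t Dm mu := exists z, ~LE t z /\ ((LE z mu /\ ~LE z Dm) \/ (~LE z mu /\ LE z Dm)).
Definition SNMU3 t s mu := exists Q, ~LE t Q /\ (IN t Q mu /\ NIN s Q mu).
Definition SNMU4 t DM D' mu := exists H H' W W' I X X' U U',
  ((~LE t H /\ (~LE t H' /\ (~LE p11 W /\ (~LE p11 W' /\ (LE t W /\ (~LE t I /\ (~LE p11 X /\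
     (~LE p11 X' /\ (~LE p11 U /\ ~LE p11 U'))))))))) /\
   (COV H H' /\ (COV W W' /\ (COV X X' /\ COV U U')))) /\
  ((IN W H mu /\ (NIN W' H mu /\ (IN W I DM /\ (NIN W' I DM /\ (IN X H' mu /\ (NIN X' H' mu /\
     (IN U I D' /\ NIN U' I D'))))))) /\ ~ X' = U).
Definition SN5 t s Q1 Dm DM D' mu := LE t s /\ (NSTAIR t DM \/ (NSTAIR t D' \/ (SNDREL Q1 DM D' \/
  (NROWLE mu DM \/ (SNMU2 t Dm mu \/ (SNMU3 t s mu \/ SNMU4 t DM D' mu)))))).
Definition SNotDef rh sg t s S Q1 Dm DM D' mu :=
  SNt t \/ (SNs sg s \/ (SNS t s S \/ (SNQ t S Q1 \/ (SNDm t rh Dm \/ SN5 t s Q1 Dm DM D' mu)))).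
Definition SBody sg pi t s mu := (~LE t s \/ (LE pi mu /\ ROWLE mu pi)) /\ (LE t s \/ LE pi sg).
Definition SemF rh sg pi t s S Q1 Dm DM D' mu :=
  ((~LE p11 rh /\ ~LE p11 sg) /\ ~LE p11 pi) /\
  (SNotDef rh sg t s S Q1 Dm DM D' mu \/ SBody sg pi t s mu).

Lemma semF v : bsat v Fm <-> SemF (v 0) (v 1) (v 2) (v 3) (v 4) (v 5) (v 6) (v 7) (v 8) (v 9) (v 10).
Proof. reflexivity. Qed.

Lemma totE P : ~ LE p11 P -> P = totp (r P 0).
Proof. by move/TOT_iff/tot_of. Qed.
Lemma colE Q : ~ LE (totp 2) Q -> Q = colp (height Q).
Proof. by move/COL_iff/col_of. Qed.
Lemma TOT_tot a : ~ LE p11 (totp a).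
Proof. by apply/TOT_iff; rewrite r_tot. Qed.
Lemma COL_col q : ~ LE (totp 2) (colp q).
Proof. apply/COL_iff; rewrite r_col; by case: (0 < q). Qed.
Lemma LEt x a : LE (totp a) x <-> a <= r x 0.
Proof. exact: LE_tot_l. Qed.
Lemma LEp11 x : LE p11 x <-> 2 <= height x.
Proof. by rewrite p11_col LE_col_l. Qed.

Lemma IN' P Q L : ~ LE p11 P -> ~ LE (totp 2) Q ->
  (IN P Q L <-> r P 0 <= 1 \/ height Q <= 1 \/ (r P 0).-1 <= r L (height Q - 2)).
Proof. move=> /totE {1}-> /colE {1}->; exact: IN_iff. Qed.
Lemma NIN' P Q L : ~ LE p11 P -> ~ LE (totp 2) Q ->
  (NIN P Q L <-> ~ (r P 0 <= 1 \/ height Q <= 1 \/ (r P 0).-1 <= r L (height Q - 2))).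
Proof. move=> HP HQ; rewrite NIN_iff IN' //. Qed.
Lemma COVt P P' : ~ LE p11 P -> ~ LE p11 P' -> (COV P P' <-> r P' 0 = (r P 0).+1).
Proof. move=> /totE {1}-> /totE {1}->; exact: COV_tot. Qed.
Lemma COVc Q Q' : ~ LE (totp 2) Q -> ~ LE (totp 2) Q' -> (COV Q Q' <-> height Q' = (height Q).+1).
Proof. move=> /colE {1}-> /colE {1}->; exact: COV_col. Qed.
Lemma eqt P P' : ~ LE p11 P -> ~ LE p11 P' -> (P = P' <-> r P 0 = r P' 0).
Proof.
move=> /totE E1 /totE E2; split => [->//|H]; by rewrite E1 E2 H.
Qed.
Lemma IN_pq p q L : IN (totp p) (colp q) L <-> p <= 1 \/ q <= 1 \/ p.-1 <= r L (q - 2).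
Proof. exact: IN_iff. Qed.
Lemma rtot a : r (totp a) 0 = a.
Proof. by rewrite r_tot. Qed.

Lemma nstair_stair n : ~ NSTAIR (totp 2) (stair n).
Proof.
move=> [P [P' [Q [Q' [[[[[HP HP'] HtP] [[HQ HQ'] HcQ]] [C1 C2]] [Hin Hor]]]]]].
move: HtP HcQ C1 C2 Hin Hor; rewrite LEt LEp11 COVt // COVc // !IN' // !NIN' // !r_stair.
lia.
Qed.

Lemma stair_of D : ~ NSTAIR (totp 2) D -> forall i, r D i = r D 0 - i.
Proof.
move=> N.
have cell : forall j w, 1 <= w -> w <= r D j -> (w <= r D j.+1 <-> w.+1 <= r D j).
  move=> j w Hw Hwj; apply: NNPP => Hn; apply: N.
  have hc1 : COV (totp w.+1) (totp w.+2) by rewrite COV_tot.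
  have hc2 : COV (colp j.+2) (colp j.+3) by rewrite COV_col.
  have ht : LE (totp 2) (totp w.+1) by rewrite LEt rtot; lia.
  have hq : LE p11 (colp j.+2) by rewrite LEp11 height_col.
  have hin : forall a b, IN (totp a) (colp b) D <-> (a <= 1 \/ b <= 1 \/ a.-1 <= r D (b - 2)).
    by move=> a b; rewrite IN_pq.
  have hnin : forall a b, NIN (totp a) (colp b) D <-> ~ (a <= 1 \/ b <= 1 \/ a.-1 <= r D (b - 2)).
    by move=> a b; rewrite NIN_iff IN_pq.
  exists (totp w.+1), (totp w.+2), (colp j.+2), (colp j.+3).
  refine (conj (conj (conj (conj (conj (@TOT_tot w.+1) (@TOT_tot w.+2)) ht)
    (conj (conj (@COL_col j.+2) (@COL_col j.+3)) hq)) (conj hc1 hc2)) (conj _ _)).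
  - rewrite hin; right; right; have -> : j.+2 - 2 = j by lia. done.
  - have E1 : j.+2 - 2 = j by lia. have E2 : j.+3 - 2 = j.+1 by lia.
    case: (classic (w <= r D j.+1)) => H1; [left|right].
    + rewrite hin hnin E1 E2 /=; split; [by right; right | lia].
    + rewrite hin hnin E1 E2 /=; split; [lia | right; right; lia].
have step : forall j, r D j.+1 = r D j - 1.
  move=> j; have Hm := r_mono D (leqnSn j).
  case: (posnP (r D j)) => Ha; first lia.
  have H1 := cell j (r D j) Ha (leqnn _).
  case: (leqP (r D j) 1) => Ha2.
  - have : ~ (r D j <= r D j.+1) by move/H1; lia. lia.
  - have H2 := cell j (r D j).-1 (ltac:(lia)) (ltac:(lia)).
    have : (r D j).-1 <= r D j.+1 by apply/H2; lia.
    have : ~ (r D j <= r D j.+1) by move/H1; lia. lia.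
elim => [|i IH]; first by rewrite subn0.
rewrite step IH; lia.
Qed.

Lemma stairE D : (forall i, r D i = r D 0 - i) -> D = stair (r D 0).
Proof. move=> H; apply: part_ext => i; by rewrite H r_stair. Qed.

Lemma fact_t t : ~ SNt t -> t = totp 2.
Proof.
move=> /not_or_and [/not_or_and [H1 H2] H3].
have E := totE H1; rewrite E in H2 H3 *; congr totp.
move: H2; rewrite LEt r_p11 /= => H2.
have : LE (totp (r t 0)) (totp 2).
  apply: NNPP => H4; apply: H3; exists (totp 2); split => //; split; first exact: TOT_tot.
  by rewrite LEt r_p11.
rewrite LEt rtot; lia.
Qed.

Lemma fact_s k s : ~ SNs (totp k) s -> s = totp k.+1.
Proof.
move=> /not_or_and [H1 /NCOV_iff /NNPP H2].
rewrite (totE H1) in H2 *; move/COV_tot: H2 => ->. done.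
Qed.

Lemma fact_stair n D : ~ NSTAIR (totp 2) D -> LE (totp n) D -> ROWLE D (totp n) -> D = stair n.
Proof.
move=> H1 H2 /ROWLE_iff H3; rewrite (stairE (stair_of H1)); congr stair.
move: H2 H3; rewrite LEt rtot; lia.
Qed.

Lemma fact_S k S : ~ SNS (totp 2) (totp k.+1) S -> S = stair k.+1.
Proof.
move=> /not_or_and [H1 /not_or_and [/NNPP H2 /NROWLE_iff /NNPP H3]].
exact: fact_stair.
Qed.

Lemma fact_Dm m Dm : ~ SNDm (totp 2) (totp m) Dm -> Dm = stair m.
Proof.
move=> /not_or_and [H1 /not_or_and [/NNPP H2 /NROWLE_iff /NNPP H3]].
exact: fact_stair.
Qed.

Lemma fact_Q k Q1 : ~ SNQ (totp 2) (stair k.+1) Q1 -> Q1 = colp k.+1.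
Proof.
move=> /not_or_and [/not_or_and [H1 /NNPP H2] H3].
have EQ := colE H1.
have Hs : height Q1 <= k.+1 by case: H2 => Hs _; rewrite -(height_stair k.+1); exact: Hs.
have : LE (colp k.+1) Q1.
  apply: NNPP => H4; apply: H3; exists (colp k.+1); split => //; split; first exact: COL_col.
  by rewrite LE_col_l height_stair.
rewrite LE_col_l => H5; rewrite {1}EQ; congr colp; lia.
Qed.

Lemma fact_5 m k DM D' mu : 0 < k ->
  ~ SN5 (totp 2) (totp k.+1) (colp k.+1) (stair m) DM D' mu -> r mu 0 = m * k.
Proof.
move=> Hk H.
have Hts : LE (totp 2) (totp k.+1) by rewrite LEt rtot; lia.
have {}H : ~ (NSTAIR (totp 2) DM \/ (NSTAIR (totp 2) D' \/ (SNDREL (colp k.+1) DM D' \/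
  (NROWLE mu DM \/ (SNMU2 (totp 2) (stair m) mu \/ (SNMU3 (totp 2) (totp k.+1) mu \/
   SNMU4 (totp 2) DM D' mu)))))) by move=> H'; apply: H; split.
move: H => /not_or_and [N1 /not_or_and [N2 /not_or_and [N3 /not_or_and
  [/NROWLE_iff/NNPP/ROWLE_iff N4 /not_or_and [N5 /not_or_and [N6 N7]]]]]].
have rDM := stair_of N1; have rD' := stair_of N2.
set M := r DM 0 in rDM N4 *. set M' := r D' 0 in rD' *.
have rel : forall a, IN (totp a) p11 D' <-> IN (totp a) (colp k.+1) DM.
  move=> a; apply: NNPP => Hn; apply: N3; exists (totp a); split; first exact: TOT_tot.
  case: (classic (IN (totp a) p11 D')) => H1; [left|right]; rewrite !NIN_iff; split => //.
  - by move=> H2; apply: Hn; split => _.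
  - apply: NNPP => H2; apply: Hn; split => H3; exfalso; [exact: H1 | exact: H2].
have {}rel : forall a, (a <= 1 \/ 2 <= 1 \/ a.-1 <= M') <-> (a <= 1 \/ k.+1 <= 1 \/ a.-1 <= M - (k - 1)).
  move=> a; move: (rel a); rewrite p11_col !IN_pq rD' rDM.
  move=> [H1 H2]; split => H3; [have := H1 ltac:(lia) | have := H2 ltac:(lia)]; lia.
have EM' : M' = M - (k - 1).
  have := rel M'.+2; have := rel (M - (k - 1)).+2. lia.
have Hh : height mu = m.
  have hq : forall q, LE (colp q) mu <-> LE (colp q) (stair m).
    move=> q; apply: NNPP => Hn; apply: N5; exists (colp q); split; first exact: COL_col.
    case: (classic (LE (colp q) mu)) => H1; [left|right]; split => //.
    - by move=> H2; apply: Hn; split => _.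
    - apply: NNPP => H2; apply: Hn; split => H3; exfalso; [exact: H1 | exact: H2].
  have := hq (height mu); have := hq m. rewrite !LE_col_l !height_stair. lia.
have Hge : forall j, 1 <= r mu j -> k <= r mu j.
  move=> j Hj.
  have : IN (totp 2) (colp j.+2) mu -> IN (totp k.+1) (colp j.+2) mu.
    move=> H1; apply: NNPP => H2; apply: N6; exists (colp j.+2); split; first exact: COL_col.
    by split => //; rewrite NIN_iff.
  rewrite !IN_pq; have -> : j.+2 - 2 = j by lia.
  move=> H; have := H ltac:(right; right; done). lia.
have Hstep : forall j, 1 <= r mu j -> r mu j.+1 = r mu j - k.
  move=> j Hj.
  have Hwk := Hge j Hj.
  have HwM : r mu j <= M by have := r_mono mu (leq0n j); lia.
  set w := r mu j in Hj Hwk HwM *. set v := r mu j.+1.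
  set u := r D' (M - w).
  have Hu : u = w - k + 1 by rewrite /u rD' EM'; lia.
  apply: NNPP => Hne; apply: N7.
  exists (colp j.+2), (colp j.+3), (totp w.+1), (totp w.+2), (colp (M - w).+2),
    (totp v.+1), (totp v.+2), (totp u.+1), (totp u.+2).
  have E1 : j.+2 - 2 = j by lia. have E2 : j.+3 - 2 = j.+1 by lia.
  have E3 : (M - w).+2 - 2 = M - w by lia.
  refine (conj (conj (conj _ (conj _ (conj _ (conj _ (conj _ (conj _ (conj _ (conj _ (conj _ _)))))))))
     (conj _ (conj _ (conj _ _)))) (conj (conj _ (conj _ (conj _ (conj _ (conj _ (conj _ (conj _ _))))))) _)).
  all: try exact: COL_col; try exact: TOT_tot.
  - by rewrite LEt rtot.
  - by rewrite COV_col.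
  - by rewrite COV_tot.
  - by rewrite COV_tot.
  - by rewrite COV_tot.
  - rewrite IN_pq E1 /=; by right; right.
  - rewrite NIN_iff IN_pq E1 /=; lia.
  - rewrite IN_pq E3 rDM /=; right; right; lia.
  - rewrite NIN_iff IN_pq E3 rDM /=; lia.
  - rewrite IN_pq E2 /=; by right; right.
  - rewrite NIN_iff IN_pq E2 /=; lia.
  - rewrite IN_pq E3 /=; by right; right.
  - rewrite NIN_iff IN_pq E3 /=; lia.
  - move/tot_inj => E; apply: Hne; lia.
case: (posnP m) => Hm.
  by rewrite Hm mul0n; apply: r_ge; rewrite Hh Hm.
have Hpos : forall j, (1 <= r mu j) = (j < m) by move=> j; rewrite -Hh -r_pos.
have Hd : forall d, d < m -> r mu (m - d.+1) = d.+1 * k.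
  elim => [|d IH] Hd.
  - have H1 : 1 <= r mu (m - 1) by rewrite Hpos; lia.
    have := Hstep _ H1; have -> : (m - 1).+1 = m by lia.
    rewrite r_ge ?Hh // => H2. have := Hge _ H1. lia.
  - have H1 : 1 <= r mu (m - d.+2) by rewrite Hpos; lia.
    have := Hstep _ H1; have -> : (m - d.+2).+1 = m - d.+1 by lia.
    rewrite IH; last lia. have := Hge _ H1. move=> H2 H3.
    rewrite mulSn; lia.
have := Hd m.-1 ltac:(lia). have -> : m - m.-1.+1 = 0 by lia.
by rewrite prednK.
Qed.

Lemma dir_b m k t s S Q1 Dm DM D' mu : SemF (totp m) (totp k) (totp (m*k)) t s S Q1 Dm DM D' mu.
Proof.
split; first by split; [split|]; exact: TOT_tot.
case: (classic (SNotDef (totp m) (totp k) t s S Q1 Dm DM D' mu)) => HN; [by left | right].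
move: HN => /not_or_and [Nt /not_or_and [Ns /not_or_and [NS /not_or_and [NQ /not_or_and [NDm N5]]]]].
have Et := fact_t Nt; subst t.
have Es := fact_s Ns; subst s.
have ES := fact_S NS; subst S.
have EQ := fact_Q NQ; subst Q1.
have EDm := fact_Dm NDm; subst Dm.
split.
- case: (posnP k) => Hk.
  + left; rewrite LEt rtot; lia.
  + right; have Hmu := fact_5 Hk N5; split; first by rewrite LEt Hmu.
    by rewrite ROWLE_iff rtot Hmu.
- case: (posnP k) => Hk; first by right; rewrite Hk muln0 LEt.
  by left; rewrite LEt rtot; lia.
Qed.

Lemma colE' Q : ~ LE (totp 2) Q -> exists q, Q = colp q.
Proof. move/colE => ->; by eexists. Qed.
Lemma totE' P : ~ LE p11 P -> exists p, P = totp p.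
Proof. move/totE => ->; by eexists. Qed.

Lemma not_SNt : ~ SNt (totp 2).
Proof.
move=> [[H|H]|[z [[H1 H2] H3]]].
- exact: (@TOT_tot 2).
- by move: H; rewrite LEt r_p11.
- case: (totE' H1) => a Ea; subst z.
  move: H2 H3; rewrite !LEt r_p11 rtot /=; lia.
Qed.

Lemma not_SNs k : ~ SNs (totp k) (totp k.+1).
Proof.
move=> [H|H]; first exact: (@TOT_tot k.+1).
by apply: (proj1 (NCOV_iff _ _) H); rewrite COV_tot.
Qed.

Lemma not_SNstair n : ~ SNS (totp 2) (totp n) (stair n).
Proof.
move=> [H|[H|H]]; first exact: nstair_stair H.
- by apply: H; rewrite LEt r_stair subn0.
- by apply: (proj1 (NROWLE_iff _ _) H); rewrite ROWLE_iff r_stair rtot subn0.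
Qed.

Lemma not_SNDm n : ~ SNDm (totp 2) (totp n) (stair n).
Proof.
move=> [H|[H|H]]; first exact: nstair_stair H.
- by apply: H; rewrite LEt r_stair subn0.
- by apply: (proj1 (NROWLE_iff _ _) H); rewrite ROWLE_iff r_stair rtot subn0.
Qed.

Lemma not_SNQ n : ~ SNQ (totp 2) (stair n) (colp n).
Proof.
move=> [[H|H]|[z [[H1 H2] H3]]].
- exact: (@COL_col n).
- by apply: H; rewrite LE_col_l height_stair.
- case: (colE' H1) => q Eq; subst z.
  move: H2 H3; rewrite !LE_col_l height_col height_stair; lia.
Qed.

Lemma not_SN5 m k :
  ~ SN5 (totp 2) (totp k.+1) (colp k.+1) (stair m) (stair (m*k+k)) (stair (m*k+k+1-k)) (prog m k).
Proof.
move=> [Hts H].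
have Hk : 0 < k by move: Hts; rewrite LEt rtot; lia.
case: H => [N|[N|[N|[N|[N|[N|N]]]]]].
- exact: nstair_stair N.
- exact: nstair_stair N.
- move: N => [P [HP [[H1 H2]|[H1 H2]]]]; case: (totE' HP) => a Ea; subst P;
  move: H1 H2; rewrite p11_col ?NIN_iff !IN_pq !r_stair; lia.
- apply: (proj1 (NROWLE_iff _ _) N); rewrite ROWLE_iff r_prog r_stair subn0; lia.
- move: N => [z [Hz [[H1 H2]|[H1 H2]]]]; case: (colE' Hz) => q Eq; subst z;
  move: H1 H2; rewrite !LE_col_l height_prog // height_stair; lia.
- move: N => [Q [HQ [H1 H2]]]; case: (colE' HQ) => q Eq; subst Q.
  move: H1 H2; rewrite NIN_iff !IN_pq !r_prog.
  case E: (m - (q - 2)) => [|c]; first by rewrite mul0n; lia.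
  rewrite mulSn; lia.
- move: N => [H [H' [W [W' [I [X [X' [U [U' [[[a1 [a2 [a3 [a4 [a5 [a6 [a7 [a8 [a9 a10]]]]]]]]]
    [c1 [c2 [c3 c4]]]] [[i1 [i2 [i3 [i4 [i5 [i6 [i7 i8]]]]]]] ne]]]]]]]]]]].
  case: (colE' a1) => h Eh; case: (colE' a2) => h' Eh'; case: (totE' a3) => w Ew;
  case: (totE' a4) => w' Ew'; case: (colE' a6) => i Ei; case: (totE' a7) => x Ex;
  case: (totE' a8) => x' Ex'; case: (totE' a9) => u Eu; case: (totE' a10) => u' Eu'.
  subst H H' W W' I X X' U U'.
  move/COV_col: c1 => Eh'; move/COV_tot: c2 => Ew'; move/COV_tot: c3 => Ex'; move/COV_tot: c4 => Eu'.
  subst h' w' x' u'.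
  move: a5; rewrite LEt rtot => a5.
  have ne' : x.+1 <> u by move=> E; apply: ne; rewrite E.
  move: i1 i2 i3 i4 i5 i6 i7 i8; rewrite !NIN_iff !IN_pq !r_prog !r_stair => i1 i2 i3 i4 i5 i6 i7 i8.
  have Hh : 2 <= h by lia.
  case E: (m - (h - 2)) i1 i2 => [|c] i1 i2; first by move: i1 i2; rewrite mul0n; lia.
  have E2 : m - (h.+1 - 2) = c by lia.
  move: i1 i2 i5 i6; rewrite E2 mulSn => i1 i2 i5 i6.
  lia.
Qed.

Lemma dir_a m k N :
  SemF (totp m) (totp k) (totp N) (totp 2) (totp k.+1) (stair k.+1) (colp k.+1) (stair m)
    (stair (m*k+k)) (stair (m*k+k+1-k)) (prog m k) -> N = m * k.
Proof.
move=> [_ [HN|[HB1 HB2]]].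
- exfalso; case: HN => [H|[H|[H|[H|[H|H]]]]].
  + exact: not_SNt H.
  + exact: not_SNs H.
  + exact: not_SNstair H.
  + exact: not_SNQ H.
  + exact: not_SNDm H.
  + exact: not_SN5 H.
- case: (posnP k) => Hk.
  + case: HB2; first by rewrite LEt rtot; lia.
    by rewrite LEt rtot Hk muln0; lia.
  + case: HB1; first by rewrite LEt rtot; lia.
    move=> [H1 /ROWLE_iff H2]; move: H1 H2; rewrite LEt rtot r_prog subn0; lia.
Qed.

Lemma tp_iff p : total_part p <-> ~ LE p11 p.
Proof.
rewrite TOT_iff /total_part -/(height p); split.
- move=> H; apply: r_ge; lia.
- move=> H; have := r_pos p 1; rewrite H /=; lia.
Qed.

Lemma pw_r p : height p <= 1 -> part_weight p = r p 0.
Proof.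
case: p => [[|x [|y s]]] Hp //= H; rewrite /part_weight /r /=; by rewrite ?addn0.
Qed.

Lemma pw_tot p : ~ LE p11 p -> part_weight p = r p 0.
Proof. by move/tp_iff/pw_r. Qed.

Theorem proposition3p14 :
  Pi_definable3 3 (fun rho sigma pi =>
    [/\ total_part rho, total_part sigma, total_part pi & part_weight pi = part_weight rho * part_weight sigma]).
Proof.
exists [:: [:: 3; 4; 5; 6; 7; 8; 9; 10]; Evars Fm; Avars Fm], (Mat Fm); split => // v.
rewrite (prenex3 _ _ wfF); split.
- move=> H.
  have := H v (fun _ _ => erefl); rewrite semF => [[[[T0 T1] T2] _]].
  set m := r (v 0) 0. set k := r (v 1) 0. set N := r (v 2) 0.
  have E0 := totE T0; have E1 := totE T1; have E2 := totE T2.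
  set w := upd (upd (upd (upd (upd (upd (upd (upd v 3 (totp 2)) 4 (totp k.+1)) 5 (stair k.+1))
    6 (colp k.+1)) 7 (stair m)) 8 (stair (m*k+k))) 9 (stair (m*k+k+1-k))) 10 (prog m k).
  have Hw : forall y, y \notin [:: 3; 4; 5; 6; 7; 8; 9; 10] -> w y = v y.
    move=> y Hy; rewrite /w /upd.
    by repeat (case: eqP => [E|_]; first by subst y).
  have HW := H w Hw; rewrite semF in HW.
  have e0 : w 0 = totp m by rewrite -E0.
  have e1 : w 1 = totp k by rewrite -E1.
  have e2 : w 2 = totp N by rewrite -E2.
  rewrite e0 e1 e2 in HW.
  have HN := dir_a HW.
  split; [exact/tp_iff|exact/tp_iff|exact/tp_iff|].
  rewrite !pw_tot //; exact: HN.
- move=> [T0 T1 T2 HW] w Hw; rewrite semF.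
  move/tp_iff: T0 => T0; move/tp_iff: T1 => T1; move/tp_iff: T2 => T2.
  rewrite (Hw 0) // (Hw 1) // (Hw 2) //.
  rewrite (totE T0) (totE T1) (totE T2).
  move: HW; rewrite !pw_tot // => ->.
  exact: dir_b.
Qed.
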